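(* For every integer $k\ge 1$, the complete graph $K_{2k+1}$ has a quasi-majority neighbor sum distinguishing $3$-edge-coloring in which exactly $k$ vertices are each incident to $k-1$ edges of color $2$ and the remaining $k+1$ vertices are each incident to $k$ edges of color $2$.
   Context: A $3$-edge-coloring of $G$ is any map $c:E(G)\to\{1,2,3\}$ (adjacent edges may share colors). It induces $\sigma_c(v)=\sum_{u\in N(v)}c(vu)$. The coloring is neighbor sum distinguishing if $\sigma_c(u)\ne\sigma_c(v)$ for every edge $uv$, and quasi-majority if every vertex $v$ is incident to at most $\lceil d(v)/2\rceil$ edges of each single color. *)

(* Defs.v *)
From mathcomp Require Import all_boot.
Set Implicit Arguments. Unset Strict Implicit. Unset Printing Implicit Defensive.

(* An edge coloring of the complete graph K_n on vertex set 'I_n is encoded as a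
   symmetric function c : 'I_n -> 'I_n -> nat; c u v (u != v) is the color of
   the edge uv. The values on the diagonal are irrelevant. *)

Definition is_3_edge_coloring_Kn (n : nat) (c : 'I_n -> 'I_n -> nat) : Prop :=
  (forall u v : 'I_n, u != v -> c u v = c v u) /\
  (forall u v : 'I_n, u != v -> 1 <= c u v <= 3).

Definition sigma_Kn (n : nat) (c : 'I_n -> 'I_n -> nat) (v : 'I_n) : nat :=
  \sum_(u : 'I_n | u != v) c v u.

Definition col_deg (n : nat) (c : 'I_n -> 'I_n -> nat) (v : 'I_n) (i : nat) : nat :=
  #|[set u : 'I_n | (u != v) && (c v u == i)]|.

(* in K_n every vertex is adjacent to all others *)
Definition nsd_Kn (n : nat) (c : 'I_n -> 'I_n -> nat) : Prop :=
  forall u v : 'I_n, u != v -> sigma_Kn c u <> sigma_Kn c v.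

(* degree in K_n is n-1; ceil(d/2) = uphalf d *)
Definition quasi_majority_Kn (n : nat) (c : 'I_n -> 'I_n -> nat) : Prop :=
  forall (v : 'I_n) (i : nat), col_deg c v i <= uphalf n.-1.

(* Main.v *)
From mathcomp Require Import all_boot zify.
Require Import Defs.
Lemma sum_odd v m : \sum_(0 <= u < m) odd (v + u) = (m + v %% 2) %/ 2.
Proof.
elim: m => [|m IH]; first by rewrite big_nil /=; lia.
rewrite big_nat_recr //= IH -modn2; lia.
Qed.
Lemma sum_even v m : \sum_(0 <= u < m) ~~ odd (v + u) = (m + (v+1) %% 2) %/ 2.
Proof.
elim: m => [|m IH]; first by rewrite big_nil /=; lia.
rewrite big_nat_recr //= IH.
have := modn2 (v+m). case: (odd (v+m)) => /= h; lia.
Qed.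
Lemma sum_odd_lt v m N : v <= N -> \sum_(0 <= u < m) (odd (v + u) && (v + u < N)) = (minn (v+m) N - v + v %% 2) %/ 2.
Proof.
move=> hv; elim: m => [|m IH]; first by rewrite big_nil /=; lia.
rewrite big_nat_recr //= IH.
have := modn2 (v+m). case: (odd (v+m)) => /= h; case: (ltnP (v+m) N) => /= h2; lia.
Qed.
Lemma sum_odd_ge v m N : v <= N -> \sum_(0 <= u < m) (odd (v + u) && (N <= v + u)) = (m + v %% 2) %/ 2 - (minn (v+m) N - v + v %% 2) %/ 2.
Proof.
move=> hv; rewrite -sum_odd -(@sum_odd_lt v m N hv).
have ->: \sum_(0 <= u < m) odd (v + u) = \sum_(0 <= u < m) (odd (v + u) && (v + u < N)) + \sum_(0 <= u < m) (odd (v + u) && (N <= v + u)).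
  rewrite -big_split /=; apply: eq_bigr => u _.
  by case: (odd _); case: (ltnP (v+u) N).
by rewrite addKn.
Qed.

Definition colr (n s : nat) : nat := if odd s then (if s < n then 1 else 3) else 2.

Lemma sum_minus n (v : 'I_n) (G : nat -> nat) :
  \sum_(u : 'I_n | u != v) G u = \sum_(0 <= u < n) G u - G v.
Proof.
rewrite big_mkord [in RHS](bigD1 v) //= addKn.
by [].
Qed.

Lemma card_sum n (v : 'I_n) (G : nat -> bool) :
  #|[set u : 'I_n | (u != v) && G u]| = \sum_(0 <= u < n) G u - G v.
Proof.
rewrite -sum1dep_card big_mkcondr /= -(@sum_minus _ v (fun u => nat_of_bool (G u))).
by apply: eq_bigr => u _; case: (G u).
Qed.

Theorem mainTheorem18 (k : nat) (hk : 1 <= k) :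
  exists c : 'I_(2 * k + 1) -> 'I_(2 * k + 1) -> nat,
    [/\ is_3_edge_coloring_Kn c, quasi_majority_Kn c, nsd_Kn c &
      exists S : {set 'I_(2 * k + 1)},
        [/\ #|S| = k,
            forall v, v \in S -> col_deg c v 2 = k - 1 &
            forall v, v \notin S -> col_deg c v 2 = k]].
Proof.
set n := 2 * k + 1.
pose c := fun u v : 'I_n => colr n (u + v).
have hA : forall v : 'I_n, \sum_(0 <= u < n) (odd (v + u) && (v + u < n)) = (n - v + v %% 2) %/ 2.
  move=> v; rewrite sum_odd_lt; last by apply: ltnW.
  by rewrite (minn_idPr (leq_addl _ _)).
have hB : forall v : 'I_n, \sum_(0 <= u < n) ~~ odd (v + u) = (n + (v+1) %% 2) %/ 2.
  by move=> v; rewrite sum_even.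
have hC : forall v : 'I_n, \sum_(0 <= u < n) (odd (v + u) && (n <= v + u)) = (n + v %% 2) %/ 2 - (n - v + v %% 2) %/ 2.
  move=> v; rewrite sum_odd_ge; last by apply: ltnW.
  by rewrite (minn_idPr (leq_addl _ _)).
have hdeg : forall (v : 'I_n) i, col_deg c v i =
   \sum_(0 <= u < n) (colr n (v + u) == i) - (colr n (v + v) == i).
  move=> v i; rewrite /col_deg -(@card_sum _ v (fun u => colr n (v + u) == i)).
  by congr #|_|; apply/setP => u; rewrite !inE /c /=.
have hvv : forall v : nat, colr n (v + v) = 2.
  by move=> v; rewrite /colr addnn odd_double.
have hsig : forall v : 'I_n, sigma_Kn c v = 3 * k + v.
  move=> v; rewrite /sigma_Kn /c (@sum_minus _ v (fun u => colr n (v + u))) hvv.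
  have -> : \sum_(0 <= u < n) colr n (v + u) =
     \sum_(0 <= u < n) (odd (v + u) && (v + u < n)) + 2 * \sum_(0 <= u < n) ~~ odd (v + u)
     + 3 * \sum_(0 <= u < n) (odd (v + u) && (n <= v + u)).
    rewrite !big_distrr -!big_split /=; apply: eq_bigr => u _.
    by rewrite /colr; case: (odd _); case: (ltnP (v+u) n).
  rewrite hA hB hC. have := ltn_ord v. rewrite /n. lia.
exists c; split.
- split; first by move=> u v _; rewrite /c addnC.
  by move=> u v _; rewrite /c /colr; case: ifP => _ //; case: ifP.
- move=> v i; rewrite hdeg hvv.
  have -> : uphalf n.-1 = k by rewrite /n addn1 /= mulnC muln2 uphalf_double.
  have hv := ltn_ord v.
  case: i => [|[|[|[|i]]]].
  + rewrite big1 //; last by move=> u _; rewrite /colr; case: ifP => _ //; case: ifP.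
  + have -> : \sum_(0 <= u < n) (colr n (v + u) == 1) = \sum_(0 <= u < n) (odd (v + u) && (v + u < n)).
      by apply: eq_bigr => u _; rewrite /colr; case: (odd _); case: (_ < _).
    rewrite hA. move: hv; rewrite /n; lia.
  + have -> : \sum_(0 <= u < n) (colr n (v + u) == 2) = \sum_(0 <= u < n) ~~ odd (v + u).
      by apply: eq_bigr => u _; rewrite /colr; case: (odd _); case: (_ < _).
    rewrite hB. move: hv; rewrite /n; lia.
  + have -> : \sum_(0 <= u < n) (colr n (v + u) == 3) = \sum_(0 <= u < n) (odd (v + u) && (n <= v + u)).
      by apply: eq_bigr => u _; rewrite /colr; case: (odd _); case: (ltnP (v + u) n).
    rewrite hC. move: hv; rewrite /n; lia.
  + rewrite big1 //; last by move=> u _; rewrite /colr; case: ifP => _ //; case: ifP.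
- move=> u v huv; rewrite !hsig => /eqP; rewrite eqn_add2l => /eqP h.
  by move/eqP: huv; apply; apply: val_inj.
exists [set v : 'I_n | odd v]; split.
- rewrite -sum1dep_card big_mkcond /=.
  have -> : \sum_(i < n) (if odd i then 1 else 0) = \sum_(0 <= u < n) odd u.
    by rewrite big_mkord; apply: eq_bigr => i _; case: (odd i).
  have := sum_odd 0 n. rewrite (eq_big_nat _ _ (F1 := fun u => nat_of_bool (odd (0 + u))) (F2 := fun u => nat_of_bool (odd u))) //.
  move=> ->; rewrite /n; lia.
- move=> v; rewrite inE => hv; rewrite hdeg hvv.
  have -> : \sum_(0 <= u < n) (colr n (v + u) == 2) = \sum_(0 <= u < n) ~~ odd (v + u).
    by apply: eq_bigr => u _; rewrite /colr; case: ifP => _ //; case: ifP.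
  rewrite hB; have h2 := modn2 v; rewrite hv in h2; move: h2; rewrite eqxx /n /=; move=> h3; have -> : (v + 1) %% 2 = 0 by rewrite -modnDml h3. rewrite addn0 mulnC divnMDl // divn_small // addn0 subn1. done.
- move=> v; rewrite inE => hv; rewrite hdeg hvv.
  have -> : \sum_(0 <= u < n) (colr n (v + u) == 2) = \sum_(0 <= u < n) ~~ odd (v + u).
    by apply: eq_bigr => u _; rewrite /colr; case: ifP => _ //; case: ifP.
  rewrite hB; have h2 := modn2 v; rewrite (negbTE hv) in h2; move: h2; rewrite eqxx /n /= => h3; have -> : (v + 1) %% 2 = 1 by rewrite -modnDml h3. have -> : 2 * k + 1 + 1 = k.+1 * 2 by lia. by rewrite mulnK // subn1.
Qed.
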